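(* Let $\Gamma=A\ast B$ with $A,B$ non-trivial, let $f=f_A\ast f_B$ be a split quasimorphism and $\widehat f$ its homogenization. Then $\mathrm{def}\,\widehat f\geq 2\max\{\mathrm{def}\, f_A,\mathrm{def}\, f_B\}$.
   Context: A quasimorphism is a map $f:\Gamma\to\mathbb{R}$ with $\mathrm{def}\, f=\sup_{g,h}|f(gh)-f(g)-f(h)|<\infty$; it is alternating if $f(g^{-1})=-f(g)$. Its homogenization is $\widehat f(g)=\lim_{n\to\infty}f(g^n)/n$. Each $1\neq g\in A\ast B$ has a unique normal form $g=a_1b_1\cdots a_nb_n$ ($a_i\in A$, $b_i\in B$, all non-trivial except possibly $a_1$ or $b_n$). For alternating quasimorphisms $f_A:A\to\mathbb{R}$, $f_B:B\to\mathbb{R}$, the split quasimorphism is $f(1)=0$ and $f(a_1b_1\cdots a_nb_n)=f_A(a_1)+f_B(b_1)+\dots+f_A(a_n)+f_B(b_n)$. *)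

(* Defs.v *)
From Stdlib Require Import Reals List.
From Coquelicot Require Import Coquelicot.
Open Scope R_scope.

Record Group := {
  carrier :> Type;
  gmul : carrier -> carrier -> carrier;
  gone : carrier;
  ginv : carrier -> carrier;
  gmulA : forall x y z, gmul x (gmul y z) = gmul (gmul x y) z;
  gmul1x : forall x, gmul gone x = x;
  gmulx1 : forall x, gmul x gone = x;
  gmulVx : forall x, gmul (ginv x) x = gone;
  gmulxV : forall x, gmul x (ginv x) = gone
}.
Arguments gmul {g} _ _.
Arguments gone {g}.
Arguments ginv {g} _.

Fixpoint gpow {G : Group} (g : G) (n : nat) : G :=
  match n with O => gone | S m => gmul g (gpow g m) end.

Definition is_hom {G H : Group} (phi : G -> H) : Prop :=
  forall x y, phi (gmul x y) = gmul (phi x) (phi y).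

Definition defect {G : Group} (f : G -> R) : Rbar :=
  Lub_Rbar (fun r => exists g h : G, r = Rabs (f (gmul g h) - f g - f h)).

Definition quasimorphism {G : Group} (f : G -> R) : Prop :=
  exists C : R, forall g h : G, Rabs (f (gmul g h) - f g - f h) <= C.

Definition alternating {G : Group} (f : G -> R) : Prop :=
  forall g : G, f (ginv g) = - f g.

Definition homogenization {G : Group} (f : G -> R) : G -> R :=
  fun g => real (Lim_seq (fun n => f (gpow g n) / INR n)).

Section FreeProduct.
Context {A B G : Group} (iA : A -> G) (iB : B -> G).

Definition letter_nontriv (x : A + B) : Prop :=
  match x with inl a => a <> gone | inr b => b <> gone end.

Definition other_factor (x y : A + B) : Prop :=
  match x, y with inl _, inr _ => True | inr _, inl _ => True | _, _ => False end.

(* reduced word: non-trivial letters, alternating between A and B.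
   These are exactly the normal forms a1 b1 ... an bn (a1 or bn possibly
   trivial, i.e. omitted). *)
Fixpoint reduced (w : list (A + B)) : Prop :=
  match w with
  | nil => True
  | x :: w' => letter_nontriv x /\
      (match w' with nil => True | y :: _ => other_factor x y end) /\ reduced w'
  end.

Definition letter_img (x : A + B) : G :=
  match x with inl a => iA a | inr b => iB b end.

Definition eval_word (w : list (A + B)) : G :=
  fold_right (fun x acc => gmul (letter_img x) acc) gone w.

Definition is_free_product : Prop :=
  is_hom iA /\ is_hom iB /\
  forall g : G, exists! w : list (A + B), reduced w /\ eval_word w = g.

(* f is the split quasimorphism f_A * f_B: f(1)=0 and
   f(a1 b1 ... an bn) = fA a1 + fB b1 + ... + fA an + fB bn. *)
Definition is_split_qm (fA : A -> R) (fB : B -> R) (f : G -> R) : Prop :=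
  forall w, reduced w ->
    f (eval_word w) =
    fold_right (fun x acc =>
      match x with inl a => fA a | inr b => fB b end + acc) 0 w.
End FreeProduct.

(* Main.v *)
Require Import Defs.
From Stdlib Require Import Reals List Lra Lia Classical.
From Coquelicot Require Import Coquelicot.
Open Scope R_scope.
Import ListNotations.

Lemma hom_one {G H : Group} (phi : G -> H) : is_hom phi -> phi gone = gone.
Proof.
  intro Hphi.
  assert (H1 : phi gone = gmul (phi gone) (phi gone)) by (rewrite <- Hphi, gmul1x; reflexivity).
  transitivity (gmul (ginv (phi gone)) (gmul (phi gone) (phi gone))).
  - rewrite gmulA, gmulVx, gmul1x; reflexivity.
  - rewrite <- H1, gmulVx; reflexivity.
Qed.

Fixpoint rep {T} (n : nat) (w : list T) : list T :=
  match n with O => nil | S m => w ++ rep m w end.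

Section Core.
Variables (A B G : Group) (iA : A -> G) (iB : B -> G) (fA : A -> R) (fB : B -> R) (f : G -> R).
Hypothesis HA : is_hom iA.
Hypothesis HB : is_hom iB.
Hypothesis altA : alternating fA.
Hypothesis altB : alternating fB.
Hypothesis Hs : is_split_qm iA iB fA fB f.

Definition sumw (l : list (A + B)) : R :=
  fold_right (fun x acc => match x with inl a => fA a | inr b => fB b end + acc) 0 l.

Lemma sumw_app l1 l2 : sumw (l1 ++ l2) = sumw l1 + sumw l2.
Proof. induction l1 as [|x l IH]; simpl. lra. unfold sumw in *; rewrite IH; lra. Qed.

Lemma sumw_rep n w : sumw (rep n w) = INR n * sumw w.
Proof.
  induction n as [|n IH]; simpl rep. simpl. lra.
  rewrite sumw_app, IH, S_INR. lra.
Qed.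

Lemma eval_app l1 l2 : eval_word iA iB (l1 ++ l2) = gmul (eval_word iA iB l1) (eval_word iA iB l2).
Proof.
  induction l1 as [|x l IH]; simpl. rewrite gmul1x; reflexivity.
  unfold eval_word in *; simpl. rewrite IH, gmulA; reflexivity.
Qed.

Lemma gpow_rep w n : gpow (eval_word iA iB w) n = eval_word iA iB (rep n w).
Proof.
  induction n as [|n IH]; simpl. reflexivity.
  rewrite IH, eval_app; reflexivity.
Qed.

Lemma cancelB (b c : B) (X : G) : gmul b c = gone -> gmul (iB b) (gmul (iB c) X) = X.
Proof. intro E. rewrite gmulA, <- HB, E, (hom_one iB HB), gmul1x; reflexivity. Qed.

Lemma mergeA (u v : A) (X : G) : gmul (iA u) (gmul (iA v) X) = gmul (iA (gmul u v)) X.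
Proof. rewrite gmulA, <- HA; reflexivity. Qed.

Lemma fA_one : fA gone = 0.
Proof.
  assert (E := altA gone).
  assert (ginv (gone : A) = gone) by (rewrite <- (gmulVx A gone) at 2; rewrite gmulx1; reflexivity).
  rewrite H in E; lra.
Qed.

Lemma inv_ne (b : B) : b <> gone -> ginv b <> gone.
Proof.
  intros Hb E; apply Hb.
  transitivity (gmul b (ginv b)). rewrite E, gmulx1; reflexivity. apply gmulxV.
Qed.

Lemma lim_const_from1 (s : nat -> R) c : (forall n, s (S n) = c) -> real (Lim_seq s) = c.
Proof.
  intro Hc. rewrite <- Lim_seq_incr_1.
  rewrite (Lim_seq_ext _ (fun _ => c)) by exact Hc.
  rewrite Lim_seq_const; reflexivity.
Qed.

Lemma core (b : B) : b <> gone ->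
  forall M, (forall g h : G, Rabs (homogenization f (gmul g h) - homogenization f g - homogenization f h) <= M) ->
  forall u v : A, Rabs (fA (gmul u v) - fA u - fA v) <= M / 2.
Proof.
  intros Hb M HM u v.
  assert (M0 : 0 <= M) by (eapply Rle_trans; [apply Rabs_pos | apply (HM gone gone)]).
  destruct (classic (u = gone)) as [Hu|Hu].
  { subst u. rewrite gmul1x, fA_one. replace (fA v - 0 - fA v) with 0 by ring.
    rewrite Rabs_R0; lra. }
  destruct (classic (v = gone)) as [Hv|Hv].
  { subst v. rewrite gmulx1, fA_one. replace (fA u - fA u - 0) with 0 by ring.
    rewrite Rabs_R0; lra. }
  destruct (classic (gmul u v = gone)) as [Huv|Huv].
  { assert (v = ginv u).
    { rewrite <- (gmul1x A v), <- (gmulVx A u), <- gmulA, Huv, gmulx1; reflexivity. }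
    rewrite Huv, fA_one, H, altA. replace (0 - fA u - - fA u) with 0 by ring.
    rewrite Rabs_R0; lra. }
  set (b' := ginv b).
  assert (Hb' : b' <> gone) by (apply inv_ne; exact Hb).
  set (w := gmul u v).
  set (wg := [inr b; inl v; inr b'; inl u] : list (A + B)).
  set (wh := [inl v; inr b; inl u; inr b'] : list (A + B)).
  set (pre := [inr b; inl v; inr b'] : list (A + B)).
  set (mid := [inl w; inr b; inl w; inr b'] : list (A + B)).
  set (suf := [inl w; inr b; inl u; inr b'] : list (A + B)).
  assert (fb' : fB b' = - fB b) by apply altB.
  assert (Rg : forall n, reduced (rep n wg)).
  { induction n as [|n IH]. simpl; auto.
    simpl rep. destruct n; unfold wg in *; simpl in *; tauto. }
  assert (Rh : forall n, reduced (rep n wh)).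
  { induction n as [|n IH]. simpl; auto.
    simpl rep. destruct n; unfold wh in *; simpl in *; tauto. }
  assert (Hd : forall k, exists t, rep k mid ++ suf = inl w :: t).
  { intro k; destruct k; simpl; eexists; reflexivity. }

  assert (Rm : forall k, reduced (rep k mid ++ suf)).
  { induction k as [|k IH]. simpl; repeat split; auto.
    change (reduced (mid ++ (rep k mid ++ suf))). destruct (Hd k) as [t Ht].
    rewrite Ht in *. unfold mid. simpl in IH |- *. tauto. }
  assert (Rgh : forall k, reduced (pre ++ rep k mid ++ suf)).
  { intro k. destruct (Hd k) as [t Ht]. rewrite Ht. pose proof (Rm k) as R. rewrite Ht in R.
    simpl in *. repeat split; tauto. }
  assert (Eg : homogenization f (eval_word iA iB wg) = fA u + fA v).
  { unfold homogenization. apply lim_const_from1. intro n.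
    rewrite gpow_rep, (Hs _ (Rg (S n))). change (sumw (rep (S n) wg) / INR (S n) = fA u + fA v).
    rewrite sumw_rep. unfold wg, wh. simpl sumw. rewrite fb'. field. apply not_0_INR; lia. }
  assert (Eh : homogenization f (eval_word iA iB wh) = fA u + fA v).
  { unfold homogenization. apply lim_const_from1. intro n.
    rewrite gpow_rep, (Hs _ (Rh (S n))). change (sumw (rep (S n) wh) / INR (S n) = fA u + fA v).
    rewrite sumw_rep. unfold wg, wh. simpl sumw. rewrite fb'. field. apply not_0_INR; lia. }
  set (gh := gmul (eval_word iA iB wg) (eval_word iA iB wh)).
  assert (Pgh : forall k, gpow gh (S k) = eval_word iA iB (pre ++ rep k mid ++ suf)).
  { induction k as [|k IH].
    - simpl gpow. rewrite gmulx1. unfold gh. rewrite <- eval_app.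
      simpl. rewrite !(mergeA u v). reflexivity.
    - change (gmul gh (gpow gh (S k)) = eval_word iA iB (pre ++ rep (S k) mid ++ suf)).
      rewrite IH. unfold gh. rewrite <- !eval_app. simpl rep. rewrite <- app_assoc.
      simpl.
      rewrite (cancelB b' b _ (gmulVx B b)).
      rewrite !(mergeA u v). reflexivity. }
  assert (Egh : homogenization f gh = 2 * fA w).
  { unfold homogenization.
    assert (L : is_lim_seq (fun n => f (gpow gh n) / INR n) (2 * fA w)).
    { apply is_lim_seq_incr_1.
      apply is_lim_seq_ext with (fun n => 2 * fA w + (fA u + fA v - fA w) * / INR (S n)).
      - intro n. rewrite Pgh, (Hs _ (Rgh n)).
        change (2 * fA w + (fA u + fA v - fA w) * / INR (S n) = sumw (pre ++ rep n mid ++ suf) / INR (S n)).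
        rewrite !sumw_app, sumw_rep. unfold pre, mid, suf. simpl sumw. rewrite fb', S_INR. field.
        pose proof (pos_INR n); lra.
      - assert (Hl : is_lim_seq (fun n => 2 * fA w + (fA u + fA v - fA w) * / INR (S n)) (2 * fA w + (fA u + fA v - fA w) * 0)).
        2: { replace (2 * fA w + (fA u + fA v - fA w) * 0) with (2 * fA w) in Hl by ring. exact Hl. }
        apply is_lim_seq_plus'. apply is_lim_seq_const.
        apply is_lim_seq_mult'. apply is_lim_seq_const.
        assert (I := is_lim_seq_inv INR p_infty is_lim_seq_INR ltac:(discriminate)).
        apply is_lim_seq_incr_1 in I. exact I. }
    rewrite (is_lim_seq_unique _ _ L). reflexivity. }
  pose proof (HM (eval_word iA iB wg) (eval_word iA iB wh)) as K.
  fold gh in K. rewrite Egh, Eg, Eh in K.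
  replace (2 * fA w - (fA u + fA v) - (fA u + fA v)) with (2 * (fA (gmul u v) - fA u - fA v)) in K by (unfold w; ring).
  rewrite Rabs_mult, (Rabs_right 2) in K by lra. fold w in K. lra.
Qed.

End Core.

Definition swl {A B : Type} (x : A + B) : B + A :=
  match x with inl a => inr a | inr b => inl b end.

Lemma split_swap (A B G : Group) (iA : A -> G) (iB : B -> G) fA fB f :
  is_split_qm iA iB fA fB f -> is_split_qm iB iA fB fA f.
Proof.
  intros H w Hw.
  assert (R1 : reduced (map swl w)).
  { induction w as [|x w IH]; simpl in *; auto.
    destruct Hw as [H1 [H2 H3]]. split; [destruct x; exact H1|split; [|auto]].
    destruct w as [|y w]; simpl; auto. destruct x, y; simpl in *; auto. }
  specialize (H _ R1).
  assert (E1 : eval_word iA iB (map swl w) = eval_word iB iA w).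
  { clear. induction w as [|x w IH]; simpl; auto. unfold eval_word in *; simpl.
    rewrite IH; destruct x; reflexivity. }
  rewrite E1 in H. rewrite H. clear. induction w as [|x w IH]; simpl; auto.
  rewrite IH; destruct x; reflexivity.
Qed.

Lemma defect_fin {G : Group} (f : G -> R) : quasimorphism f ->
  exists r, defect f = Finite r /\
    forall M, (forall g h, Rabs (f (gmul g h) - f g - f h) <= M) -> r <= M.
Proof.
  intros [C HC]. unfold defect.
  destruct (Lub_Rbar_correct (fun r => exists g h : G, r = Rabs (f (gmul g h) - f g - f h))) as [Hub Hl].
  revert Hub Hl.
  destruct (Lub_Rbar _) as [r| |]; intros Hub Hl.
  - exists r; split; auto. intros M HM.
    apply (Hl (Finite M)). intros x [g [h ->]]. simpl. apply HM.
  - exfalso. apply (Hl (Finite C)). intros x [g [h ->]]. simpl. apply HC.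
  - exfalso. apply (Hub (Rabs (f (gmul gone gone) - f gone - f gone))). eauto.
Qed.

Theorem lemma3p2 (A B G : Group) (iA : A -> G) (iB : B -> G)
  (fA : A -> R) (fB : B -> R) (f : G -> R) :
  is_free_product iA iB ->
  (exists a : A, a <> gone) -> (exists b : B, b <> gone) ->
  quasimorphism fA -> alternating fA ->
  quasimorphism fB -> alternating fB ->
  is_split_qm iA iB fA fB f ->
  Rbar_le (Finite (2 * Rmax (real (defect fA)) (real (defect fB))))
          (defect (homogenization f)).
Proof.
  intros [HA [HB _]] [a Ha] [b Hb] qA altA qB altB Hs.
  destruct (defect_fin fA qA) as [dA [EA HdA]].
  destruct (defect_fin fB qB) as [dB [EB HdB]].
  rewrite EA, EB. simpl real.
  unfold defect.
  destruct (Lub_Rbar_correct (fun r => exists g h : G, r = Rabs (homogenization f (gmul g h) - homogenization f g - homogenization f h))) as [Hub Hl].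
  revert Hub Hl.
  destruct (Lub_Rbar _) as [M| |]; intros Hub Hl.
  - assert (HM : forall g h : G, Rabs (homogenization f (gmul g h) - homogenization f g - homogenization f h) <= M).
    { intros g h. apply (Hub _). eauto. }
    assert (dA <= M / 2).
    { apply HdA. intros u v. eapply core; eauto. }
    assert (dB <= M / 2).
    { apply HdB. intros u v. eapply (core B A G iB iA fB fA f); eauto. apply split_swap; auto. }
    simpl. unfold Rmax. destruct (Rle_dec dA dB); lra.
  - simpl; trivial.
  - exfalso. eapply (Hub _). exists gone, gone. reflexivity.
Qed.
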